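(* In a search game (as defined in the context), $U_{\mathrm{opt}}=\max_{f\in F_C}\sum_{\omega\in\Omega}f(\omega)\mu(\omega)v_{\mathfrak{s}}(\omega)=\max_{f\in F_F}\sum_{\omega\in\Omega}f(\omega)\mu(\omega)v_{\mathfrak{s}}(\omega)$, where $F_C$ is the set of compatible mixed outcomes and $F_F$ is the set of mixed outcomes generated by fractional allocations.
   Context: A search game has a finite set of players $N=\{1,\ldots,n\}$, a finite set $\Omega$ of locations, for each player $i$ a partition $\Pi_i$ of $\Omega$ (with $\pi_i(\omega)$ the cell containing $\omega$), a capacity $K_i\in\mathbb{N}$, a prior $\mu\in\Delta(\Omega)$, and social values $v_{\mathfrak{s}}(\omega)\ge0$ (other ingredients are irrelevant here). A pure strategy $s_i$ assigns to each cell $\pi_i\in\Pi_i$ a subset $s_i(\pi_i)\subseteq\pi_i$ with at most $K_i$ elements; $S$ is the set of pure profiles, and $m_s(\omega)=\sum_{i\in N}\mathbf{1}_{\omega\in s_i(\pi_i(\omega))}$. The social payoff is $U(s)=\sum_{\omega}\mu(\omega)v_{\mathfrak{s}}(\omega)\mathbf{1}_{m_s(\omega)\ge1}$ and $U_{\mathrm{opt}}=\max_{s\in S}U(s)$. A mixed outcome is a function $f:\Omega\to[0,1]$; it is compatible if for every $W\subseteq\Omega$: $\sum_{\omega\in W}f(\omega)\le\sum_{i\in N}K_i\cdot|\{\pi_i\in\Pi_i:\pi_i\cap W\ne\emptyset\}|$. A fractional allocation $\alpha=(\alpha_1,\ldots,\alpha_n)$ specifies $\alpha_i(\pi_i,\omega)\ge0$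 for every player $i$, cell $\pi_i\in\Pi_i$ and $\omega\in\pi_i$, with $\sum_{\omega\in\pi_i}\alpha_i(\pi_i,\omega)\le K_i$ for every cell; it generates $f_\alpha(\omega)=\min\big(1,\sum_{i\in N}\alpha_i(\pi_i(\omega),\omega)\big)$. *)

(* Defs.v *)
From HB Require Import structures.
From mathcomp Require Import all_boot all_order all_algebra.
From mathcomp Require Import reals.
Set Implicit Arguments. Unset Strict Implicit. Unset Printing Implicit Defensive.
Import Order.TTheory GRing.Theory Num.Theory.
Local Open Scope ring_scope.

Section SearchGame.
Variables (R : realType) (Omega : finType) (n : nat).
Variable P : 'I_n -> {set {set Omega}}.
Variable K : 'I_n -> nat.
Variable mu : Omega -> R.
Variable vs : Omega -> R.

Definition cell (i : 'I_n) (w : Omega) : {set Omega} := pblock (P i) w.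

(* pure profiles: s i maps each cell to a subset of it of size <= K i
   (values on non-cells are irrelevant) *)
Definition profile := {ffun 'I_n -> {ffun {set Omega} -> {set Omega}}}.

Definition is_profile (s : profile) : bool :=
  [forall i, forall pi in P i, (s i pi \subset pi) && (#|s i pi| <= K i)%N].

Definition m_s (s : profile) (w : Omega) : nat :=
  (\sum_(i < n) (w \in s i (cell i w)))%N.

Definition U (s : profile) : R :=
  \sum_(w : Omega) mu w * vs w * ((1 <= m_s s w)%N)%:R.

Definition U_opt : R := \big[Num.max/0]_(s : profile | is_profile s) U s.

Definition mixed_outcome (f : Omega -> R) : Prop :=
  forall w, 0 <= f w <= 1.

Definition compatible (f : Omega -> R) : Prop :=
  mixed_outcome f /\
  forall W : {set Omega},
    \sum_(w in W) f w <=
    \sum_(i < n) (K i)%:R * #|[set pi in P i | pi :&: W != set0]|%:R.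

Definition frac_alloc (alpha : 'I_n -> {set Omega} -> Omega -> R) : Prop :=
  forall i, forall pi, pi \in P i ->
    (forall w, w \in pi -> 0 <= alpha i pi w) /\
    \sum_(w in pi) alpha i pi w <= (K i)%:R.

Definition f_alpha (alpha : 'I_n -> {set Omega} -> Omega -> R) (w : Omega) : R :=
  Num.min 1 (\sum_(i < n) alpha i (cell i w) w).

Definition value (f : Omega -> R) : R := \sum_(w : Omega) f w * mu w * vs w.

End SearchGame.

(* Main.v *)
Require Import Defs.
From HB Require Import structures.
From mathcomp Require Import all_boot all_order all_algebra.
From mathcomp Require Import reals.
From mathcomp Require Import zify ring lra.
Set Implicit Arguments. Unset Strict Implicit. Unset Printing Implicit Defensive.
Import Order.TTheory GRing.Theory Num.Theory.

Section Match.
Variables (X Y : finType) (adj : X -> Y -> bool).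

Definition Nb (W : {set X}) (y : Y) : bool := [exists x in W, adj x y].
Definition rk (b : Y -> nat) (W : {set X}) : nat := \sum_y b y * Nb W y.
Definition matching (b : Y -> nat) (S : {set X}) (phi : X -> option Y) :=
  (forall x, x \in S -> oapp (adj x) false (phi x)) /\
  (forall y, #|[set x in S | phi x == Some y]| <= b y).

Lemma rk_mono b (W W' : {set X}) : W \subset W' -> rk b W <= rk b W'.
Proof.
move=> sWW'; apply: leq_sum => y _; apply: leq_mul => //.
case: (boolP (Nb W y)) => //= /existsP [x /andP [xW axy]].
by rewrite lt0b; apply/existsP; exists x; rewrite (subsetP sWW').
Qed.

Lemma rk0 b : rk b set0 = 0.
Proof.
by apply: big1 => y _; rewrite /Nb; case: existsP => [[x]|]; rewrite ?inE ?muln0.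
Qed.

Lemma NbU (U1 U2 : {set X}) y : Nb (U1 :|: U2) y = Nb U1 y || Nb U2 y.
Proof.
apply/existsP/orP.
- by case=> x /andP [/setUP [h|h] a]; [left|right]; apply/existsP; exists x; rewrite h.
- by case=> /existsP [x /andP [h a]]; exists x; rewrite inE h ?orbT.
Qed.

Lemma NbI (U1 U2 : {set X}) y : Nb (U1 :&: U2) y -> Nb U1 y && Nb U2 y.
Proof.
by case/existsP=> x /andP [/setIP [h1 h2] a]; apply/andP; split; apply/existsP; exists x; rewrite ?h1 ?h2.
Qed.

Lemma rk_sub b (U1 U2 : {set X}) : rk b (U1 :|: U2) + rk b (U1 :&: U2) <= rk b U1 + rk b U2.
Proof.
rewrite /rk -!big_split /=; apply: leq_sum => y _.
rewrite -!mulnDr leq_mul2l; apply/orP; right.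
rewrite NbU; move: (@NbI U1 U2 y).
by case: (Nb U1 y); case: (Nb U2 y); case: (Nb (U1 :&: U2) y) => // /(_ isT).
Qed.

Lemma card_fiber (W : {set X}) (phi : X -> option Y) :
  (forall x, x \in W -> phi x != None) ->
  #|W| = \sum_y #|[set x in W | phi x == Some y]|.
Proof.
move=> hW.
have -> : #|W| = \sum_(x in W) \sum_y (phi x == Some y).
  rewrite -sum1_card; apply: eq_bigr => x xW.
  move: (hW x xW); case: (phi x) => // y0 _.
  rewrite (bigD1 y0) //= eqxx big1 // => y ny.
  by case: eqP => // [[E]]; rewrite E eqxx in ny.
rewrite exchange_big /=; apply: eq_bigr => y _.
rewrite -sum1_card big_mkcond /= [RHS]big_mkcond /=; apply: eq_bigr => x _.
by rewrite !inE; case: (x \in W); case: (phi x == Some y).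
Qed.

Lemma match_hall b (M : {set X}) phi (W : {set X}) :
  matching b M phi -> W \subset M -> #|W| <= rk b W.
Proof.
move=> [aM cM] sWM.
rewrite (@card_fiber W phi); last first.
  by move=> x /(subsetP sWM) /aM; case: (phi x).
apply: leq_sum => y _.
case: (boolP (Nb W y)) => hN.
  rewrite muln1; apply: leq_trans (cM y); apply: subset_leq_card.
  by apply/subsetP => x; rewrite !inE => /andP [/(subsetP sWM) -> ->].
rewrite muln0 leqn0 cards_eq0; apply/eqP/setP => x; rewrite !inE.
apply/negP => /andP [xW /eqP px].
move/negP: hN; apply; apply/existsP; exists x; rewrite xW /=.
by have := aM x (subsetP sWM x xW); rewrite px.
Qed.

Lemma rk_split b (W0 Z : {set X}) :
  rk b (Z :|: W0) = rk b W0 + rk (fun y => b y * ~~ Nb W0 y) Z.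
Proof.
rewrite /rk -big_split /=; apply: eq_bigr => y _; rewrite NbU.
by case: (Nb W0 y); case: (Nb Z y); rewrite /= ?muln0 ?muln1 ?addn0 ?add0n.
Qed.

Lemma hall (S : {set X}) b :
  (forall W : {set X}, W \subset S -> #|W| <= rk b W) -> exists phi, matching b S phi.
Proof.
have [k lek] := ubnP #|S|; elim: k => // k IH in S b lek *.
move=> hS.
case: (set_0Vmem S) => [-> | [x0 x0S]].
  exists (fun _ => None); split => [x|y]; rewrite ?inE //.
  by rewrite (_ : [set x in set0 | _] = set0) ?cards0 //; apply/setP => x; rewrite !inE.
case: (boolP [exists W : {set X}, [&& W \subset S, W != set0, W != S & rk b W <= #|W|]]).
- case/existsP => W0 /and4P [sW0 nW0 W0S tW0].
  have ltW0 : #|W0| < #|S| by apply: proper_card; rewrite properEneq W0S sW0.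
  have [phi1 [a1 c1]] : exists phi, matching b W0 phi.
    apply: IH; first by lia.
    by move=> W sW; apply: hS; apply: subset_trans sW sW0.
  pose b2 := fun y => b y * ~~ Nb W0 y.
  have cS : #|S :\: W0| + #|W0| = #|S|.
    by rewrite -(cardsID W0 S) addnC (setIidPr sW0).
  have W0pos : 0 < #|W0| by rewrite card_gt0.
  have [phi2 [a2 c2]] : exists phi, matching b2 (S :\: W0) phi.
    apply: IH; first by lia.
    move=> Z sZ.
    have dZ : Z :&: W0 = set0.
      apply/setP => x; rewrite !inE; case xZ: (x \in Z) => //=.
      by have := subsetP sZ x xZ; rewrite inE => /andP [/negbTE -> _].
    have := cardsUI Z W0; rewrite dZ cards0 addn0 => cU.
    have := hS (Z :|: W0).
    rewrite subUset sW0 andbT (subset_trans sZ (subsetDl S W0)) => /(_ isT).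
    rewrite rk_split -/b2; lia.
  exists (fun x => if x \in W0 then phi1 x else phi2 x); split.
    move=> x xS; case: ifP => xW0; first by apply: a1.
    by apply: a2; rewrite inE xW0 xS.
  move=> y.
  have sub : [set x in S | (if x \in W0 then phi1 x else phi2 x) == Some y] \subset
     [set x in W0 | phi1 x == Some y] :|: [set x in S :\: W0 | phi2 x == Some y].
    apply/subsetP => x; rewrite !inE; case: ifP => xW0 /= /andP [xS e].
      by rewrite e.
    by rewrite xS e.
  apply: leq_trans (subset_leq_card sub) _.
  rewrite cardsU; have := c2 y; rewrite /b2.
  case: (boolP (Nb W0 y)) => hN /=.
    by rewrite muln0 leqn0 => /eqP ->; rewrite addn0; apply: leq_trans (leq_subr _ _) (c1 y).
  rewrite muln1 => h2.
  have -> : [set x in W0 | phi1 x == Some y] = set0.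
    apply/setP => x; rewrite !inE; apply/negP => /andP [xW /eqP px].
    move/negP: hN; apply; apply/existsP; exists x; rewrite xW /=.
    by have := a1 x xW; rewrite px.
  by rewrite cards0 add0n; apply: leq_trans (leq_subr _ _) h2.
- rewrite negb_exists => /forallP nt.
  have : 0 < rk b [set x0] by have := hS [set x0]; rewrite sub1set x0S cards1 => /(_ isT).
  rewrite lt0n sum_nat_eq0 negb_forall => /existsP [y]; rewrite /= muln_eq0 negb_or => /andP [by0 hN].
  have axy : adj x0 y.
    by move: hN; rewrite /Nb; case: existsP => // [[x /andP []]]; rewrite inE => /eqP ->.
  pose b' := fun z => if z == y then (b y).-1 else b z.
  have cS : #|S| = #|S :\ x0|.+1 by rewrite (cardsD1 x0 S) x0S.
  have [phi' [a' c']] : exists phi, matching b' (S :\ x0) phi.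
    apply: IH; first by lia.
    move=> W sW.
    case: (set_0Vmem W) => [-> | [w wW]]; first by rewrite cards0.
    have := nt W; rewrite (subset_trans sW (subsetDl S [set x0])).
    have -> : W != set0 by apply/set0Pn; exists w.
    have -> : W != S.
      apply/negP => /eqP eWS; have := subsetP sW x0; rewrite eWS x0S !inE eqxx.
      by move/(_ isT).
    rewrite /= -ltnNge => lt.
    have : rk b W = rk b' W + Nb W y.
      rewrite /rk (bigD1 y) //= [in RHS](bigD1 y) //= /b' eqxx.
      have -> : \sum_(i | i != y) (if i == y then (b y).-1 else b i) * Nb W i =
                \sum_(i | i != y) b i * Nb W i by apply: eq_bigr => z /negbTE ->.
      have := @prednK (b y) ltac:(by rewrite lt0n).
      case: (Nb W y); rewrite ?muln1 ?muln0; lia.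
    case: (Nb W y) => /=; lia.
  exists (fun u => if u == x0 then Some y else phi' u); split.
    move=> u uS; case: eqP => [-> //|/eqP nu].
    by apply: a'; rewrite !inE nu uS.
  move=> z.
  set A := [set u in S | _].
  rewrite (cardsD1 x0 A).
  have sub : A :\ x0 \subset [set u in S :\ x0 | phi' u == Some z].
    apply/subsetP => u; rewrite !inE => /andP [nu /andP [uS]].
    by rewrite (negbTE nu) => ->; rewrite uS.
  have := subset_leq_card sub; have := c' z; rewrite /b' /A inE eqxx /=.
  case: eqP => [-> | nz]; first by rewrite x0S /=; lia.
  have -> : (Some y == Some z) = false by apply/eqP => [[]] /esym. 
  by rewrite andbF add0n => h1 h2; apply: leq_trans h2 h1.
Qed.

Definition hallb b (S : {set X}) := [forall W : {set X}, (W \subset S) ==> (#|W| <= rk b W)].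

Variable R : realFieldType.
Local Open Scope ring_scope.

Lemma sum_le_card (f : X -> R) (W : {set X}) :
  (forall x, f x <= 1) -> \sum_(x in W) f x <= #|W|%:R.
Proof.
by move=> f1; apply: le_trans (ler_sum _ (fun x _ => f1 x)) _; rewrite sumr_const.
Qed.

Lemma augment b (f : X -> R) (M A : {set X}) phi :
  (forall x, 0 <= f x) -> (forall x, f x <= 1) ->
  (forall W : {set X}, \sum_(x in W) f x <= (rk b W)%:R) ->
  matching b M phi -> M \subset A -> (#|M|%:R < \sum_(x in A) f x) ->
  exists M2 : {set X}, (exists phi2, matching b M2 phi2) /\
     M \subset M2 /\ M2 \subset A /\ (#|M| < #|M2|)%N.
Proof.
move=> f0 f1 fc mM sMA lt.
case: (boolP [exists x in A :\: M, hallb b (x |: M)]).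
  case/exists_inP => x xAM hx; exists (x |: M); split.
    apply: hall => W sW; by move/forallP: hx => /(_ W); rewrite sW.
  move: xAM; rewrite inE => /andP [xM xA].
  split; first exact: subsetUr.
  by rewrite subUset sub1set xA sMA cardsU1 xM.
rewrite negb_exists_in => /forall_inP nh.
pose Wx x := odflt set0 [pick W : {set X} | (W \subset x |: M) && (rk b W < #|W|)%N].
have hW x : x \in A :\: M -> Wx x \subset x |: M /\ (rk b (Wx x) < #|Wx x|)%N.
  move=> xAM; have := nh x xAM; rewrite /hallb negb_forall => /existsP [W].
  rewrite negb_imply -ltnNge => hWW.
  rewrite /Wx; case: pickP => [W' /andP [? ?] | /(_ W)]; first by [].
  by rewrite hWW.
pose U := \bigcup_(x in A :\: M) Wx x.
have good : (rk b U <= #|U :&: M|)%N.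
  rewrite /U; apply: (big_ind (fun V : {set X} => rk b V <= #|V :&: M|)%N).
  - by rewrite rk0.
  - move=> V1 V2 h1 h2.
    have := rk_sub b V1 V2.
    have := match_hall mM (subsetIr (V1 :&: V2) M).
    have := rk_mono b (subsetIl (V1 :&: V2) M).
    have := cardsUI (V1 :&: M) (V2 :&: M).
    have -> : (V1 :&: M) :|: (V2 :&: M) = (V1 :|: V2) :&: M.
      by apply/setP => u; rewrite !inE; case: (u \in V1); case: (u \in V2); case: (u \in M).
    have -> : (V1 :&: M) :&: (V2 :&: M) = (V1 :&: V2) :&: M.
      by apply/setP => u; rewrite !inE; case: (u \in V1); case: (u \in V2); case: (u \in M).
    lia.
  - move=> x xAM; have [s1 s2] := hW x xAM.
    have : Wx x \subset [set x] :|: (Wx x :&: M).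
      apply/subsetP => u uW; have := subsetP s1 u uW; rewrite !inE uW.
      by case/orP => ->; rewrite ?orbT.
    move/subset_leq_card; rewrite cardsU cards1; lia.
have sDU : A :\: M \subset U.
  apply/subsetP => x xAM; apply/bigcupP; exists x => //.
  have [s1 s2] := hW x xAM.
  case: (boolP (x \in Wx x)) => // nx.
  have sWM : Wx x \subset M.
    apply/subsetP => u uW; have := subsetP s1 u uW; rewrite !inE.
    by case/orP => // /eqP e; move: uW; rewrite e (negbTE nx).
  by have := match_hall mM sWM; rewrite leqNgt s2.
have e1 : \sum_(x in A) f x = \sum_(x in A :&: U) f x + \sum_(x in A :\: U) f x.
  by rewrite (big_setID U).
have h1 : \sum_(x in A :&: U) f x <= #|U :&: M|%:R.
  apply: le_trans (fc _) _; rewrite ler_nat; apply: leq_trans good.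
  by apply: rk_mono; apply: subsetIr.
have h2 : \sum_(x in A :\: U) f x <= #|M :\: U|%:R.
  apply: le_trans (sum_le_card _ f1) _; rewrite ler_nat; apply: subset_leq_card.
  apply/subsetP => x; rewrite !inE => /andP [xU xA]; rewrite xU /=.
  case: (boolP (x \in M)) => // xM.
  by exfalso; move/negP: xU; apply; apply: (subsetP sDU); rewrite inE xM xA.
have e2 := cardsID U M.
have : (#|M|%:R : R) = #|M :&: U|%:R + #|M :\: U|%:R by rewrite -natrD e2.
rewrite setIC => e3.
lra.
Qed.

Lemma weighted b (f : X -> R) :
  (forall x, 0 <= f x) -> (forall x, f x <= 1) ->
  (forall W : {set X}, \sum_(x in W) f x <= (rk b W)%:R) ->
  forall (A : {set X}) (c : X -> R), (forall x, x \in A -> 0 <= c x) ->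
  exists M : {set X}, (exists phi, matching b M phi) /\ M \subset A /\
    \sum_(x in A) c x * f x <= \sum_(x in M) c x /\ \sum_(x in A) f x <= #|M|%:R.
Proof.
move=> f0 f1 fc A.
have [k lek] := ubnP #|A|; elim: k => // k IH in A lek *.
move=> c c0.
case: (set_0Vmem A) => [-> | [x0 x0A]].
  exists set0; split.
    exists (fun _ => None); split => [x|y]; rewrite ?inE //.
    by rewrite (_ : [set x in set0 | _] = set0) ?cards0 //; apply/setP => x; rewrite !inE.
  by rewrite sub0set !big_set0 cards0.
case: (@arg_minP _ _ _ x0 (mem A) c x0A) => xm xmA0 hmin.
have xmA : xm \in A := xmA0.
pose c' := fun x => c x - c xm.
have cm0 : 0 <= c xm by apply: c0.
have c'0 : forall x, x \in A -> 0 <= c' x by move=> x xA; rewrite /c' subr_ge0 hmin.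
have cA : #|A| = #|A :\ xm|.+1 by rewrite (cardsD1 xm A) xmA.
have [M' [[phi' mM'] [sM'A' [hs' hc']]]] : exists M : {set X}, (exists phi, matching b M phi) /\ M \subset A :\ xm /\
    \sum_(x in A :\ xm) c' x * f x <= \sum_(x in M) c' x /\ \sum_(x in A :\ xm) f x <= #|M|%:R.
  apply: IH; first by lia.
  by move=> x; rewrite inE => /andP [_ xA]; apply: c'0.
have sM'A : M' \subset A by apply: subset_trans sM'A' (subsetDl _ _).
have eA : \sum_(x in A) f x = f xm + \sum_(x in A :\ xm) f x by rewrite (big_setD1 xm).
have eC : \sum_(x in A) c x * f x = \sum_(x in A :\ xm) c' x * f x + c xm * \sum_(x in A) f x.
  rewrite (big_setD1 xm) //= eA mulrDr.
  have -> : \sum_(x in A :\ xm) c' x * f x = \sum_(x in A :\ xm) c x * f x - c xm * \sum_(x in A :\ xm) f x.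
    by rewrite mulr_sumr -sumrB; apply: eq_bigr => x _; rewrite /c' mulrBl.
  by ring.
have eS : forall S : {set X}, \sum_(x in S) c x = \sum_(x in S) c' x + c xm * #|S|%:R.
  move=> S; have -> : c xm * #|S|%:R = \sum_(x in S) c xm by rewrite sumr_const mulr_natr.
  rewrite -big_split /=.
  by apply: eq_bigr => x _; rewrite /c' subrK.
case: (boolP (\sum_(x in A) f x <= #|M'|%:R)) => hle.
  exists M'; split; first by exists phi'.
  split => //; split => //.
  rewrite eC eS; apply: lerD => //; apply: ler_wpM2l => //.
rewrite -ltNge in hle.
have [M2 [mM2 [sM'M2 [sM2A ltc]]]] := augment f0 f1 fc mM' sM'A hle.
exists M2; split => //; split => //.
have hM2 : \sum_(x in M') c' x <= \sum_(x in M2) c' x.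
  rewrite [X in _ <= X](big_setID M') (setIidPr sM'M2) lerDl.
  by apply: sumr_ge0 => x; rewrite inE => /andP [_ xM2]; apply: c'0; apply: (subsetP sM2A).
have hA : \sum_(x in A) f x <= #|M2|%:R.
  rewrite eA; apply: le_trans (lerD (f1 xm) hc') _.
  have := ltc; rewrite -(ler_nat R) -addn1 natrD => h; apply: le_trans h; lra.
split => //.
rewrite eC eS; apply: lerD; first by apply: le_trans hs' hM2.
by apply: ler_wpM2l.
Qed.
End Match.

Local Open Scope ring_scope.

Section Concrete.
Variables (R : realType) (Omega : finType) (n : nat)
  (P : 'I_n -> {set {set Omega}}) (K : 'I_n -> nat).
Hypothesis hP : forall i, partition (P i) [set: Omega].

Definition adjC (x : Omega) (p : 'I_n * {set Omega}) : bool := p.2 == cell P p.1 x.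
Definition bC (p : 'I_n * {set Omega}) : nat := K p.1.

Lemma cell_mem i w : cell P i w \in P i.
Proof. by apply: pblock_mem; case/and3P: (hP i) => /eqP -> _ _; rewrite inE. Qed.

Lemma mem_cell i w : w \in cell P i w.
Proof. by rewrite /cell mem_pblock; case/and3P: (hP i) => /eqP -> _ _; rewrite inE. Qed.

Lemma cell_def i pi w : pi \in P i -> w \in pi -> cell P i w = pi.
Proof. by move=> piP wpi; apply: def_pblock => //; case/and3P: (hP i). Qed.

Lemma NbC (W : {set Omega}) i pi :
  Nb adjC W (i, pi) = (pi \in P i) && (pi :&: W != set0).
Proof.
apply/existsP/andP.
  case=> x /andP [xW /eqP e]; rewrite /= in e; rewrite e cell_mem; split => //.
  by apply/set0Pn; exists x; rewrite inE mem_cell xW.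
case=> piP /set0Pn [x]; rewrite inE => /andP [xpi xW]; exists x.
by rewrite xW /adjC /= (cell_def piP xpi).
Qed.

Lemma rkC (W : {set Omega}) :
  rk adjC bC W = (\sum_(i < n) K i * #|[set pi in P i | pi :&: W != set0]|)%N.
Proof.
rewrite /rk.
transitivity (\sum_(i < n) \sum_(pi : {set Omega}) K i * Nb adjC W (i, pi))%N.
  by rewrite pair_big /=; apply: eq_big => // [[i pi]].
apply: eq_bigr => i _; rewrite -big_distrr /=; congr (_ * _)%N.
rewrite -sum1_card [RHS]big_mkcond /=; apply: eq_bigr => pi _.
by rewrite NbC inE; case: (_ && _).
Qed.

Lemma compat_rk (f : Omega -> R) :
  compatible P K f -> forall W : {set Omega}, \sum_(x in W) f x <= (rk adjC bC W)%:R.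
Proof.
case=> _ h W; apply: le_trans (h W) _.
by rewrite rkC natr_sum le_eqVlt; apply/orP; left; apply/eqP/eq_bigr => i _; rewrite natrM.
Qed.


Lemma prof_of_match (M : {set Omega}) phi :
  matching adjC bC M phi ->
  exists s, is_profile P K s /\ (forall x, x \in M -> (1 <= m_s P s x)%N).
Proof.
case=> aM cM.
exists [ffun i => [ffun pi => [set x in M | phi x == Some (i, pi)]]]; split.
  apply/forallP => i; apply/forall_inP => pi piP; rewrite !ffunE; apply/andP; split.
    apply/subsetP => x; rewrite inE => /andP [xM /eqP e].
    by have := aM x xM; rewrite e /adjC /= => /eqP ->; apply: mem_cell.
  exact: (cM (i, pi)).
move=> x xM; have := aM x xM; case e: (phi x) => [[i pi]|] //=; rewrite /adjC /= => /eqP epi.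
rewrite /m_s (bigD1 i) //= !ffunE inE xM e -epi eqxx /=.
by rewrite addSn.
Qed.

Variables (mu vs : Omega -> R).

Lemma U_ge (s : profile Omega n) (M : {set Omega}) :
  (forall w, 0 <= mu w * vs w) -> (forall x, x \in M -> (1 <= m_s P s x)%N) ->
  \sum_(x in M) mu x * vs x <= U P mu vs s.
Proof.
move=> c0 hM; rewrite /U big_mkcond /=; apply: ler_sum => x _.
case: ifP => xM; first by rewrite hM // mulr1.
by apply: mulr_ge0 => //; apply: ler0n.
Qed.

Lemma U_le_opt s : is_profile P K s -> U P mu vs s <= U_opt P K mu vs.
Proof. by move=> hs; rewrite /U_opt; apply: (le_bigmax_cond _ _ hs). Qed.

Definition s0 : profile Omega n := [ffun i => [ffun pi => set0]].

Lemma s0_prof : is_profile P K s0.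
Proof.
by apply/forallP => i; apply/forall_inP => pi _; rewrite !ffunE sub0set cards0.
Qed.

Lemma U_s0 : U P mu vs s0 = 0.
Proof.
rewrite /U big1 // => w _; rewrite /m_s big1 ?mulr0 // => i _.
by rewrite !ffunE inE.
Qed.

Lemma U_att : exists s, is_profile P K s /\ U P mu vs s = U_opt P K mu vs.
Proof.
rewrite /U_opt; apply: (big_ind (fun v => exists s, is_profile P K s /\ U P mu vs s = v)).
- by exists s0; rewrite s0_prof U_s0.
- move=> x y [sx [hx ex]] [sy [hy ey]].
  by case: (leP x y) => _; [exists sy | exists sx].
- by move=> s hs; exists s.
Qed.


Lemma sum_ind (W S : {set Omega}) :
  \sum_(w in W) ((w \in S)%:R : R) = #|W :&: S|%:R.
Proof.
rewrite (big_setID S) /= [X in _ + X]big1; last first.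
  by move=> w; rewrite !inE => /andP [h _]; rewrite (negbTE h).
rewrite addr0 -sumr_const; apply: eq_bigr => w; rewrite !inE => /andP [_ ->].
by [].
Qed.

Definition ind (s : profile Omega n) (w : Omega) : R := ((1 <= m_s P s w)%N)%:R.

Lemma m_s_pos (s : profile Omega n) w :
  (1 <= m_s P s w)%N -> exists i, w \in s i (cell P i w).
Proof.
rewrite /m_s lt0n sum_nat_eq0 negb_forall => /existsP [i].
by case h: (w \in _) => // _; exists i.
Qed.

Lemma ind_compat s : is_profile P K s -> compatible P K (ind s).
Proof.
move=> hs; split.
  by move=> w; rewrite /ind; case: (1 <= _)%N; rewrite ?lexx ?ler01.
move=> W.
pose C := [set w | (1 <= m_s P s w)%N].
pose phi := fun w => omap (fun i => (i, cell P i w)) [pick i | w \in s i (cell P i w)].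
have mC : matching adjC bC C phi.
  split.
    move=> x; rewrite inE => /m_s_pos [i hi]; rewrite /phi.
    by case: pickP => [j _ | /(_ i)]; [rewrite /= /adjC /= | rewrite hi].
  move=> [i pi]; rewrite /bC /=.
  case: (boolP (pi \in P i)) => piP.
    move/forallP: hs => /(_ i) /forall_inP /(_ pi piP) /andP [_ hK].
    apply: leq_trans hK; apply: subset_leq_card; apply/subsetP => x.
    rewrite !inE /phi; case: pickP => [j hj | _] /andP [_] //= /eqP [ej epi].
    by rewrite -ej -epi.
  suff -> : [set x in C | phi x == Some (i, pi)] = set0 by rewrite cards0.
  apply/setP => x; rewrite !inE /phi.
  case: pickP => [j hj | _]; rewrite ?andbF //=.
  apply/negP => /andP [_ /eqP [ej epi]].
  by move/negP: piP; apply; rewrite -epi -ej cell_mem.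
have -> : \sum_(x in W) ind s x = \sum_(x in W) ((x \in C)%:R : R).
  by apply: eq_bigr => x _; rewrite /ind inE.
have e : (rk adjC bC W)%:R = \sum_i (K i)%:R * #|[set pi in P i | pi :&: W != set0]|%:R :> R.
  by rewrite rkC natr_sum; apply: eq_bigr => i _; rewrite natrM.
rewrite sum_ind -e ler_nat.
exact: leq_trans (match_hall mC (subsetIr W C)) (rk_mono adjC bC (subsetIl W C)).
Qed.

Lemma value_ind s : value mu vs (ind s) = U P mu vs s.
Proof. by rewrite /value /U; apply: eq_bigr => w _; rewrite [RHS]mulrC mulrA. Qed.

Definition alpha_s (s : profile Omega n) : 'I_n -> {set Omega} -> Omega -> R :=
  fun i pi w => ((w \in s i pi) : nat)%:R.

Lemma alpha_s_frac s : is_profile P K s -> frac_alloc P K (alpha_s s).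
Proof.
move=> hs i pi piP; split; first by move=> w _; apply: ler0n.
rewrite /alpha_s sum_ind ler_nat.
move/forallP: hs => /(_ i) /forall_inP /(_ pi piP) /andP [_ hK].
by apply: leq_trans hK; apply: subset_leq_card; apply: subsetIr.
Qed.

Lemma f_alpha_s s w : f_alpha P (alpha_s s) w = ind s w.
Proof.
rewrite /f_alpha /ind /alpha_s -natr_sum -/(m_s P s w).
case: (leqP 1 (m_s P s w)) => h.
  by rewrite min_l // ler1n.
have -> : m_s P s w = 0%N by lia.
by rewrite min_r.
Qed.

Lemma falpha_compat (alpha : 'I_n -> {set Omega} -> Omega -> R) : frac_alloc P K alpha -> compatible P K (f_alpha P alpha).
Proof.
move=> ha.
have sa0 : forall w, 0 <= \sum_(i < n) alpha i (cell P i w) w.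
  move=> w; apply: sumr_ge0 => i _.
  by have [h _] := ha i _ (cell_mem i w); apply: h; apply: mem_cell.
split.
  by move=> w; rewrite /f_alpha le_min ge_min lexx ler01 sa0.
move=> W.
apply: le_trans (_ : _ <= \sum_(w in W) \sum_(i < n) alpha i (cell P i w) w) _.
  by apply: ler_sum => w _; rewrite /f_alpha ge_min lexx orbT.
rewrite exchange_big /=; apply: ler_sum => i _.
pose Pm := [set pi in P i | pi :&: W != set0].
rewrite (partition_big (fun w => cell P i w) (fun pi => pi \in Pm)); last first.
  move=> w wW; rewrite inE cell_mem /=; apply/set0Pn; exists w.
  by rewrite inE mem_cell.
have -> : (K i)%:R * #|[set pi in P i | pi :&: W != set0]|%:R = \sum_(pi in Pm) ((K i)%:R : R) by rewrite sumr_const mulr_natr.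
apply: ler_sum => pi; rewrite inE => /andP [piP _].
have [ha0 haK] := ha i pi piP.
apply: le_trans haK.
rewrite big_mkcond [X in _ <= X]big_mkcond /=; apply: ler_sum => w _.
case: (boolP (w \in W)) => wW /=; last by case: ifP => // wpi; apply: ha0.
case: eqP => [e | _]; first by rewrite -e mem_cell.
by case: ifP => // wpi; apply: ha0.
Qed.

End Concrete.

Unset Implicit Arguments.

Theorem corollary3 (R : realType) (Omega : finType) (n : nat)
  (P : 'I_n -> {set {set Omega}}) (K : 'I_n -> nat)
  (mu : Omega -> R) (vs : Omega -> R) :
  (forall i, partition (P i) [set: Omega]) ->
  (forall w, 0 <= mu w) -> \sum_(w : Omega) mu w = 1 ->
  (forall w, 0 <= vs w) ->
  (* U_opt is the maximum over compatible mixed outcomes *)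
  ((exists f, compatible P K f /\ value mu vs f = U_opt P K mu vs) /\
   (forall f, compatible P K f -> value mu vs f <= U_opt P K mu vs)) /\
  (* U_opt is the maximum over outcomes generated by fractional allocations *)
  ((exists alpha, frac_alloc P K alpha /\
                  value mu vs (f_alpha P alpha) = U_opt P K mu vs) /\
   (forall alpha, frac_alloc P K alpha ->
                  value mu vs (f_alpha P alpha) <= U_opt P K mu vs)).
Proof.
move=> hP mu0 _ vs0.
have c0 : forall w, 0 <= mu w * vs w by move=> w; apply: mulr_ge0.
have ub : forall f, compatible P K f -> value mu vs f <= U_opt P K mu vs.
  move=> f hf.
  have [fm _] := hf.
  have f0 : forall x, 0 <= f x by move=> x; case/andP: (fm x).
  have f1 : forall x, f x <= 1 by move=> x; case/andP: (fm x).
  have [M [[phi mM] [_ [hs _]]]] :=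
    weighted f0 f1 (compat_rk hP hf) (A := [set: Omega]) (c := fun w => mu w * vs w)
      (fun x _ => c0 x).
  have [s [hs1 hs2]] := prof_of_match hP mM.
  apply: le_trans (U_le_opt mu vs hs1).
  apply: le_trans (U_ge c0 hs2).
  apply: le_trans hs.
  rewrite /value le_eqVlt; apply/orP; left; apply/eqP.
  rewrite /value; by apply: eq_big => [w|w _]; rewrite ?inE // [RHS]mulrC mulrA.
have [s [hs es]] := U_att P K mu vs.
split; split => //.
- exists (ind R P s); split; first exact: ind_compat.
  by rewrite value_ind.
- exists (alpha_s R s); split; first exact: alpha_s_frac.
  have -> : value mu vs (f_alpha P (alpha_s R s)) = value mu vs (ind R P s) by rewrite /value; apply: eq_bigr => w _; rewrite f_alpha_s.
  by rewrite value_ind.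
- by move=> alpha ha; apply: ub; apply: falpha_compat.
Qed.
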